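(* If $G^c$ is a connected vertex-coloured graph with $n$ vertices and $c$ colours, where $n>c\ge1$, then $\gamma^t(G^c)\le \frac{n+c-1}{2}$.
   Context: A vertex-coloured graph $G^c$ with colour set $\{1,\dots,c\}$ is a finite simple graph in which every vertex receives exactly one colour and every colour appears on at least one vertex. A dominating set is tropical if every colour appears on at least one of its vertices; $\gamma^t(G^c)$ is the minimum size of a tropical dominating set. *)

(* Defs.v *)
From mathcomp Require Import all_boot.
Set Implicit Arguments. Unset Strict Implicit. Unset Printing Implicit Defensive.

Definition simple_graph (T : finType) (e : rel T) : Prop :=
  symmetric e /\ irreflexive e.

Definition connected_graph (T : finType) (e : rel T) : Prop :=
  forall x y : T, connect e x y.

(* A vertex colouring with colour set {1..c} (encoded as 'I_c) in which every
   colour is used. *)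
Definition vertex_colouring (T : finType) (c : nat) (col : T -> 'I_c) : Prop :=
  forall k : 'I_c, exists v : T, col v = k.

Definition dominating (T : finType) (e : rel T) (D : {set T}) : bool :=
  [forall v, (v \in D) || [exists u in D, e u v]].

Definition tropical (T : finType) (c : nat) (col : T -> 'I_c) (D : {set T}) : bool :=
  [forall k : 'I_c, [exists v in D, col v == k]].

Definition tropical_dominating (T : finType) (e : rel T) (c : nat)
  (col : T -> 'I_c) (D : {set T}) : bool :=
  dominating e D && tropical col D.

(* gamma^t: minimum size of a tropical dominating set (the whole vertex set is
   one when every colour is used, so the default #|T| is never below it). *)
Definition tropical_domination_number (T : finType) (e : rel T) (c : nat)
  (col : T -> 'I_c) : nat :=
  \big[minn/#|T|]_(D : {set T} | tropical_dominating e col D) #|D|.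

(* Main.v *)
Require Import Defs.
From mathcomp Require Import all_boot zify.

Lemma bigmin_le_aux (I : eqType) (r : seq I) (P : pred I) (F : I -> nat) a x :
  x \in r -> P x -> \big[minn/a]_(i <- r | P i) F i <= F x.
Proof.
elim: r => //= y r IH; rewrite inE big_cons => /orP [/eqP-> Px | xr Px].
  by rewrite Px geq_minl.
case: (P y); last exact: IH.
exact: (leq_trans (geq_minr _ _) (IH xr Px)).
Qed.

Lemma gamma_le (T : finType) (e : rel T) (c : nat) (col : T -> 'I_c) (X : {set T}) :
  tropical_dominating e col X -> tropical_domination_number e col <= #|X|.
Proof.
move=> tdX; rewrite /tropical_domination_number.
by apply: bigmin_le_aux => //; rewrite mem_index_enum.
Qed.

Theorem mainTheorem4 (T : finType) (e : rel T) (c : nat) (col : T -> 'I_c) :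
  simple_graph e -> connected_graph e -> vertex_colouring col ->
  1 <= c -> c < #|T| ->
  2 * tropical_domination_number e col <= #|T| + c - 1.
Proof.
move=> [esym eirr] conn colsurj c1 cn.
have tdT : tropical_dominating e col setT.
  apply/andP; split; first by apply/forallP => v; rewrite inE.
  apply/forallP => k; have [v hv] := colsurj k.
  by apply/existsP; exists v; rewrite inE hv eqxx.
have [Dmin tdmin minP] := arg_minnP (fun D : {set T} => #|D|) tdT.
pose m := #|Dmin|.
pose f (X : {set T}) := #|[set p : T * T | (p.1 \in X) && (p.2 \in X) && e p.1 p.2]|.
pose P (X : {set T}) := tropical_dominating e col X && (#|X| <= m).
have PDmin : P Dmin by rewrite /P tdmin leqnn.
have [D /andP[tdD Dm] maxD] := arg_maxnP f PDmin.
have mD : m <= #|D| by apply: minP.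
have gD : tropical_domination_number e col <= #|D| by apply: gamma_le.
suff : 2 * #|D| <= #|T| + c - 1.
  by move=> h; apply: leq_trans h; rewrite leq_mul2l gD orbT.
pose K := [set v in D | [forall w in D, (col w == col v) ==> (w == v)]].
pose priv v x := (x \notin D) && e v x && [forall y in D, e y x ==> (y == v)].
have privex : forall v, v \in D -> v \notin K -> exists x, priv v x.
  move=> v vD vK.
  case: (boolP [exists x, priv v x]) => [/existsP//|/existsPn nopriv].
  exfalso.
  have [w0 [w0D w0c]] : exists w, w \in D /\ (col w == col v) && (w != v).
    move: vK; rewrite inE vD /= => /forall_inPn [w wD]; rewrite negb_imply => h.
    by exists w.
  have trop' : tropical col (D :\ v).
    apply/forallP => k; have /andP[_ /forallP/(_ k)/exists_inP[w wD /eqP wk]] := tdD.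
    case: (eqVneq w v) => [wv|wv].
      move: w0c => /andP[/eqP hc hne]; apply/exists_inP; exists w0.
        by rewrite !inE hne.
      by rewrite hc -wv wk.
    by apply/exists_inP; exists w; rewrite ?inE ?wv ?wD ?wk.
  have ndom : ~~ dominating e (D :\ v).
    apply/negP => dom; have := minP _ (introT andP (conj dom trop')).
    rewrite /m in Dm; move: Dm; rewrite (cardsD1 v D) vD; lia.
  move: ndom => /forallPn [x]; rewrite negb_or => /andP[hx1 /exists_inPn hx2].
  have xv : x = v.
    case: (eqVneq x v) => // xnv; exfalso.
    case xD: (x \in D).
      by move: hx1; rewrite !inE xnv xD.
    have /andP[/forallP/(_ x) + _] := tdD; rewrite xD /= => /exists_inP[u uD eux].
    case: (eqVneq u v) => [uv|unv].
      subst u; apply: (negP (nopriv x)); rewrite /priv xD eux /=.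
      apply/forall_inP => y yD; apply/implyP => eyx; apply/negPn/negP => ynv.
      by move: (hx2 y); rewrite !inE ynv yD eyx => /(_ isT).
    by move: (hx2 u); rewrite !inE unv uD eux => /(_ isT).
  subst x.
  have noDnb : forall y, y \in D -> ~~ e y v.
    move=> y yD; case: (eqVneq y v) => [->|ynv]; first by rewrite eirr.
    by apply: hx2; rewrite !inE ynv yD.
  have [w wv] : exists w, w != v.
    apply/existsP; rewrite -(negbK [exists _, _]); apply/negP => /existsPn hall.
    have : #|T| <= 1.
      rewrite -(card1 v); apply: subset_leq_card; apply/subsetP => z _.
      by rewrite inE; move: (hall z); rewrite negbK.
    lia.
  have [u evu] : exists u, e v u.
    have /connectP [pth pp wl] := conn v w.
    case: pth pp wl => [_ wl|u pth /= /andP[evu _] _]; last by exists u.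
    by move: wv; rewrite wl /= eqxx.
  have uD : u \notin D.
    apply/negP => uD; have := noDnb u uD; by rewrite esym evu.
  have [y yD eyu] : exists2 y, y \in D & e y u && (y != v).
    move: (nopriv u); rewrite /priv uD evu /= => /forall_inPn [y yD].
    by rewrite negb_imply => h; exists y.
  move: eyu => /andP[eyu ynv'].
  pose D' := u |: (D :\ v).
  have PD' : P D'.
    apply/andP; split; first (apply/andP; split).
    - apply/forallP => z; rewrite !inE.
      case: (eqVneq z u) => [//|znu] /=.
      case: (eqVneq z v) => [->|znv] /=.
        by apply/exists_inP; exists u; rewrite ?inE ?eqxx // esym.
      case zD: (z \in D) => //=.
      have /andP[/forallP/(_ z) + _] := tdD; rewrite zD /= => /exists_inP[t tD etz].
      case: (eqVneq t v) => [tv|tnv].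
        subst t; move: (nopriv z); rewrite /priv zD etz /= => /forall_inPn [t' t'D].
        rewrite negb_imply => /andP[et'z t'nv].
        by apply/exists_inP; exists t'; rewrite // !inE t'nv t'D orbT.
      by apply/exists_inP; exists t; rewrite // !inE tnv tD orbT.
    - apply/forallP => k; have /forallP/(_ k)/exists_inP[t tD tk] := trop'.
      by apply/exists_inP; exists t; rewrite // inE tD orbT.
    - rewrite cardsU1 !inE (negbTE uD) andbF /=; move: Dm; rewrite (cardsD1 v D) vD; by [].
  have hm : f D' <= f D := maxD D' PD'. suff : f D < f D' by rewrite ltnNge hm.
  apply: proper_card; apply/properP; split.
    apply/subsetP => [[a b]]; rewrite !inE /= => /andP[/andP[aD bD] eab].
    have anv : a != v by apply/eqP => av; subst a; move: (noDnb b bD); rewrite esym eab.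
    have bnv : b != v by apply/eqP => bv; subst b; move: (noDnb a aD); rewrite eab.
    by rewrite anv bnv aD bD eab !orbT.
  by exists (u, y); rewrite !inE /= ?eqxx ?ynv' ?yD ?orbT (esym u y) eyu (negbTE uD) /=; split.
pose p v := odflt v [pick x | priv v x].
have pP : forall v, v \in D :\: K -> priv v (p v).
  move=> v; rewrite inE => /andP[vK vD]; have [x px] := privex v vD vK.
  rewrite /p; case: pickP => [y py|/(_ x)] //=; by rewrite px.
have pinj : {in D :\: K &, injective p}.
  move=> v w vin win pe; have := pP v vin; have := pP w win.
  rewrite -pe => /andP[/andP[_ ewx] _] /andP[_ /forallP/(_ w)].
  move: win; rewrite inE => /andP[_ ->] /=; rewrite ewx /= => /eqP //.
have c1' : #|D :\: K| <= #|~: D|.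
  rewrite -(card_in_imset pinj); apply: subset_leq_card; apply/subsetP => x /imsetP[v vin ->].
  by rewrite inE; have /andP[/andP[] ] := pP v vin.
have KD : K \subset D by apply/subsetP => v; rewrite inE => /andP[].
have cD := cardsC D.
have cK := cardsID K D.
have DK : D :&: K = K by apply/setIidPr.
rewrite DK in cK.
have colinj : {in K &, injective col}.
  move=> v w; rewrite !inE => /andP[vD /forall_inP hv] /andP[wD _] ce.
  by have := hv w wD; rewrite ce eqxx => /implyP /(_ isT) /eqP ->.
have cKle : #|K| <= c.
  by rewrite -(card_in_imset colinj) -[c in _ <= c]card_ord; apply: max_card.
have [DK0|[v vin]] := set_0Vmem (D :\: K).
  rewrite DK0 cards0 addn0 in cK; lia.
have cKlt : #|K| < c.
  rewrite -(card_in_imset colinj) -[c in _ < c]card_ord; apply: proper_card.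
  apply/properP; split; first by apply/subsetP.
  exists (col v) => //; apply/negP => /imsetP[k kK ck].
  move: vin kK; rewrite !inE => /andP[/negP vK vD] /andP[kD /forall_inP hk].
  have := hk v vD; rewrite ck eqxx /= => /eqP vk; apply: vK; subst k.
  by rewrite vD; apply/forall_inP => w wD; apply: hk.
lia.
Qed.
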